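(* Let $k\ge3$. At any $\tau\ge1$, for any pairwise distinct $i,j,r\in[d]$, $$\frac{\mathbb{P}[i,j,r\in B_\tau]}{\mathbb{P}[i,j\in B_\tau]\cdot\mathbb{P}[i,r\in B_\tau]}\le\frac{d-1}{k-1}.$$
   Context: Integers $3\le k\le d-3$, $[d]=\{1,\dots,d\}$. SAMPLING$(k,d,\mathbf{w})$ for nonzero $\mathbf{w}\in\mathbb{R}^d$: with $q_i=|w_i|/\|\mathbf{w}\|_1$, draw $I_1\in[d]$ with $\mathbb{P}(I_1=i)=q_i$, then $k-1$ distinct indices uniformly without replacement from $[d]\setminus\{I_1\}$; output the $k$-set $B$. At round $\tau$, $B_\tau=$SAMPLING$(k,d,\hat{\mathbf{w}}_{\tau-1})$ for a nonzero vector $\hat{\mathbf{w}}_{\tau-1}\in\mathbb{R}^d$ determined by $B_1,\dots,B_{\tau-1}$ (with $\hat{\mathbf{w}}_0=\frac1d\mathbf{1}_d$); probabilities are over $B_\tau$ conditional on $B_1,\dots,B_{\tau-1}$. *)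

(* Defs.v *)
From mathcomp Require Import all_boot all_order all_algebra.
Set Implicit Arguments. Unset Strict Implicit. Unset Printing Implicit Defensive.
Import Order.TTheory GRing.Theory Num.Theory.
Local Open Scope ring_scope.

Definition l1norm (R : realFieldType) (d : nat) (w : 'I_d -> R) : R :=
  \sum_(i < d) `|w i|.

Definition qprob (R : realFieldType) (d : nat) (w : 'I_d -> R) (i : 'I_d) : R :=
  `|w i| / l1norm w.

(* Probability that k-1 indices drawn uniformly without replacement from
   [d] \ {i1} form exactly the set S: uniform over the (k-1)-subsets. *)
Definition unif_rest (R : realFieldType) (k d : nat) (i1 : 'I_d)
  (S : {set 'I_d}) : R :=
  if (i1 \notin S) && (#|S| == k.-1)%N then
    (#|[set T : {set 'I_d} | (i1 \notin T) && (#|T| == k.-1)%N]|%:R)^-1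
  else 0.

(* Law of the output B of SAMPLING(k,d,w): first I_1 ~ q, then the remaining
   k-1 indices; B = {I_1} u S. *)
Definition sampling_prob (R : realFieldType) (k d : nat) (w : 'I_d -> R)
  (B : {set 'I_d}) : R :=
  \sum_(i1 < d) qprob w i1 *
     (if i1 \in B then unif_rest R k i1 (B :\ i1) else 0).

Definition sampling_Pr (R : realFieldType) (k d : nat) (w : 'I_d -> R)
  (E : pred {set 'I_d}) : R :=
  \sum_(B : {set 'I_d} | E B) sampling_prob k w B.

(* Main.v *)
Require Import Defs.
From mathcomp Require Import all_boot all_order all_algebra.
From mathcomp Require Import zify ring lra.
Import Order.TTheory GRing.Theory Num.Theory.
Local Open Scope ring_scope.

Lemma count_sup (d k : nat) (A : {set 'I_d}) : (k <= d)%N ->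
  #|[set B : {set 'I_d} | (A \subset B) && (#|B| == k)]| = 'C(d - #|A|, d - k).
Proof.
move=> kd.
have cC : forall C : {set 'I_d}, (#|C| + #|~: C|)%N = d.
  by move=> C; rewrite cardsC card_ord.
have -> : (d - #|A|)%N = #|~: A| by have := cC A; lia.
rewrite -cards_draws.
rewrite -(card_imset _ (@setC_inj _)).
apply: eq_card => B.
rewrite (can2_imset_pre _ (@setCK _) (@setCK _)) !inE.
have -> : (B \subset ~: A) = (A \subset ~: B) by rewrite -setCS setCK.
congr (_ && _).
have := cC B; move=> h; apply/eqP/eqP; lia.
Qed.

Lemma count_M (d m : nat) (x : 'I_d) :
  #|[set T : {set 'I_d} | (x \notin T) && (#|T| == m)]| = 'C(d.-1, m).
Proof.
have -> : d.-1 = #|[set~ x]| by rewrite cardsC1 card_ord.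
rewrite -cards_draws.
apply: eq_card => T; rewrite !inE; congr (_ && _).
apply/idP/idP.
  by move=> xT; apply/subsetP => y yT; rewrite !inE; apply: contraNneq xT => <-.
by move/subsetP => h; apply/negP => /h; rewrite !inE eqxx.
Qed.

Lemma prob_val (R : realFieldType) k d (w : 'I_d -> R) (k1 : (1 <= k)%N) B :
  sampling_prob k w B =
  \sum_(x < d) qprob w x * ((x \in B) && (#|B| == k))%:R / ('C(d.-1, k.-1))%:R.
Proof.
rewrite /sampling_prob; apply: eq_bigr => x _.
case xB: (x \in B); last by rewrite mulr0 mul0r.
rewrite /unif_rest count_M !inE eqxx /=.
have hc := cardsD1 x B; rewrite xB add1n in hc.
have -> : (#|B :\ x| == k.-1) = (#|B| == k).
  by rewrite hc; case: (k) k1 => // k0 _ /=; rewrite eqSS.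
case: (#|B| == k); last by rewrite mulr0 mul0r.
by rewrite mulr1.
Qed.

Lemma sum_bool_card (T : finType) (P Q : pred T) :
  (\sum_(t | P t) (Q t : nat))%N = #|[set t | P t && Q t]|.
Proof.
rewrite -sum1_card [RHS](eq_bigl (fun t => P t && Q t)); last by move=> t; rewrite !inE.
by rewrite big_mkcondr; apply: eq_bigr => t _; case: (Q t).
Qed.

Lemma Pr_sup (R : realFieldType) k d (w : 'I_d -> R) (k1 : (1 <= k)%N) (kd : (k <= d)%N)
  (A : {set 'I_d}) :
  sampling_Pr k w (fun B => A \subset B) =
  \sum_(x < d) qprob w x * ('C(d - #|x |: A|, d - k))%:R / ('C(d.-1, k.-1))%:R.
Proof.
rewrite /sampling_Pr.
under eq_bigr do rewrite prob_val //.
rewrite exchange_big /=; apply: eq_bigr => x _.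
rewrite -mulr_suml -mulr_sumr -natr_sum sum_bool_card -count_sup //.
congr (_ * _%:R / _); apply: eq_card => B; rewrite !inE subUset sub1set.
by case: (x \in B); case: (A \subset B).
Qed.

Lemma split_sum (R : realFieldType) d (q : 'I_d -> R) (G : nat -> R) (A : {set 'I_d})
  (M : R) (hq : \sum_(x < d) q x = 1) :
  \sum_(x < d) q x * G #|x |: A| / M =
  ((\sum_(x in A) q x) * G #|A| + (1 - \sum_(x in A) q x) * G #|A|.+1) / M.
Proof.
rewrite -mulr_suml; congr (_ * _).
rewrite (bigID (mem A)) /=.
have -> : 1 - \sum_(x in A) q x = \sum_(x < d | x \notin A) q x.
  by rewrite -hq (bigID (mem A)) /= addrC addrK.
rewrite !mulr_suml; congr (_ + _); apply: eq_bigr => x xA.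
  have -> : x |: A = A.
    by apply/setP => y; rewrite !inE; case: eqP => // ->.
  done.
by rewrite cardsU1 xA.
Qed.

Lemma key (R : realFieldType) (x y z F2 F3 F4 : R) : 0 <= x -> 0 <= y -> z <= x + y ->
  z <= 1 -> F3 <= F2 -> 0 <= F3 -> F2 * F4 <= F3 ^+ 2 ->
  F2 * (z * F3 + (1 - z) * F4) <= (x * F2 + (1 - x) * F3) * (y * F2 + (1 - y) * F3).
Proof.
move=> x0 y0 zxy z1 F32 F30 FF.
have h1 : 0 <= (F3 ^+ 2 - F2 * F4) * (1 - z) by apply: mulr_ge0; lra.
have h2 : 0 <= F3 * (F2 - F3) * (x + y - z) by apply: mulr_ge0; [apply: mulr_ge0|]; lra.
have h3 : 0 <= (F2 - F3) ^+ 2 * (x * y) by apply: mulr_ge0; [apply: sqr_ge0|apply: mulr_ge0].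
have e : (x * F2 + (1 - x) * F3) * (y * F2 + (1 - y) * F3) - F2 * (z * F3 + (1 - z) * F4)
  = (F3 ^+ 2 - F2 * F4) * (1 - z) + F3 * (F2 - F3) * (x + y - z) + (F2 - F3) ^+ 2 * (x * y)
  by ring.
rewrite -subr_ge0 e; lra.
Qed.

Lemma final (R : realFieldType) (qi qj qr F2 F3 F4 M D K : R) :
  0 <= qi -> 0 <= qj -> 0 <= qr -> qi + (qj + qr) <= 1 ->
  F3 <= F2 -> 0 < F3 -> F2 * F4 <= F3 ^+ 2 -> 0 < M -> 0 < K -> K * M = D * F2 ->
  ((qi + (qj + qr)) * F3 + (1 - (qi + (qj + qr))) * F4) / M /
  (((qi + qj) * F2 + (1 - (qi + qj)) * F3) / M *
   (((qi + qr) * F2 + (1 - (qi + qr)) * F3) / M)) <= D / K.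
Proof.
move=> hi hj hr h1 F32 F30 FF M0 K0 KM.
set a := (qi + qj) * F2 + (1 - (qi + qj)) * F3.
set b := (qi + qr) * F2 + (1 - (qi + qr)) * F3.
set c := (qi + (qj + qr)) * F3 + (1 - (qi + (qj + qr))) * F4.
have a0 : 0 < a.
  have : 0 <= (qi + qj) * (F2 - F3) by apply: mulr_ge0; lra.
  rewrite /a; lra.
have b0 : 0 < b.
  have : 0 <= (qi + qr) * (F2 - F3) by apply: mulr_ge0; lra.
  rewrite /b; lra.
have F20 : 0 < F2 by lra.
have hk : F2 * c <= a * b.
  apply: key; lra.
have -> : D / K = M / F2.
  apply/eqP; rewrite eqr_div ?lt0r_neq0 //; apply/eqP; by rewrite -KM mulrC.
have -> : c / M / (a / M * (b / M)) = c * M / (a * b).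
  by field; rewrite !lt0r_neq0.
rewrite -subr_ge0.
have -> : M / F2 - c * M / (a * b) = M * (a * b - F2 * c) / (F2 * (a * b)).
  by field; rewrite !lt0r_neq0.
apply: divr_ge0; last by apply: mulr_ge0; apply: ltW => //; apply: mulr_gt0.
apply: mulr_ge0; [exact: ltW | lra].
Qed.

Lemma binlc (d c : nat) : (6 <= d)%N -> (c <= d - 3)%N ->
  ('C(d - 2, c) * 'C(d - 4, c) <= 'C(d - 3, c) ^ 2)%N.
Proof.
move=> d6 cd.
have e1 := mul_bin_down (d - 3) c.
have e2 := mul_bin_down (d - 2) c.
have h1 : (d - 3).-1 = (d - 4)%N by lia.
have h2 : (d - 2).-1 = (d - 3)%N by lia.
rewrite h1 in e1; rewrite h2 in e2.
have p : (0 < (d - 3) * (d - 2 - c))%N by rewrite muln_gt0; apply/andP; split; lia.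
rewrite -(leq_pmul2r p).
have -> : ('C(d - 2, c) * 'C(d - 4, c) * ((d - 3) * (d - 2 - c)) =
  ((d - 2 - c) * 'C(d - 2, c)) * ((d - 3) * 'C(d - 4, c)))%N by ring.
rewrite -e2 e1.
have -> : ((d - 2) * 'C(d - 3, c) * ((d - 3 - c) * 'C(d - 3, c)) =
   ('C(d - 3, c) ^ 2) * ((d - 2) * (d - 3 - c)))%N by ring.
rewrite leq_pmul2l; last by rewrite expn_gt0 bin_gt0; lia.
nia.
Qed.

Lemma q_ge0 (R : realFieldType) d (w : 'I_d -> R) x : 0 <= qprob w x.
Proof.
rewrite /qprob /l1norm; apply: divr_ge0 => //; apply: sumr_ge0 => *; exact: normr_ge0.
Qed.

Lemma q_sum (R : realFieldType) d (w : 'I_d -> R) : (exists i, w i != 0) ->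
  \sum_(x < d) qprob w x = 1.
Proof.
case=> i0 hi0.
have pos : 0 < l1norm w.
  rewrite /l1norm (bigD1 i0) //= ltr_pwDl ?normr_gt0 //.
  by apply: sumr_ge0 => *; exact: normr_ge0.
rewrite /qprob -mulr_suml -/(l1norm w) divff //; exact: lt0r_neq0.
Qed.

Lemma QA_le1 (R : realFieldType) d (q : 'I_d -> R) (A : {set 'I_d}) :
  (forall x, 0 <= q x) -> \sum_(x < d) q x = 1 -> \sum_(x in A) q x <= 1.
Proof.
move=> h0 h1; rewrite -h1 [X in _ <= X](bigID (mem A)) /= lerDl.
by apply: sumr_ge0 => *.
Qed.

Theorem lemma11 (R : realFieldType) (k d : nat)
  (hk3 : (3 <= k)%N) (hkd : (k <= d - 3)%N)
  (w : 'I_d -> R) (hw : exists i, w i != 0)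
  (i j r : 'I_d) (hij : i != j) (hir : i != r) (hjr : j != r) :
  sampling_Pr k w (fun B => [&& i \in B, j \in B & r \in B]) /
    (sampling_Pr k w (fun B => (i \in B) && (j \in B)) *
     sampling_Pr k w (fun B => (i \in B) && (r \in B)))
  <= (d - 1)%:R / (k - 1)%:R.
Proof.
have k1 : (1 <= k)%N by lia.
have kd : (k <= d)%N by lia.
set q := qprob w.
have q0 : forall x, 0 <= q x by move=> x; exact: q_ge0.
have q1 : \sum_(x < d) q x = 1 by exact: q_sum.
set A3 := i |: (j |: [set r]).
set A1 := i |: [set j].
set A2 := i |: [set r].
have e3 : sampling_Pr k w (fun B => [&& i \in B, j \in B & r \in B]) =
          sampling_Pr k w (fun B => A3 \subset B).
  by apply: eq_bigl => B; rewrite !subUset !sub1set.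
have e1 : sampling_Pr k w (fun B => (i \in B) && (j \in B)) =
          sampling_Pr k w (fun B => A1 \subset B).
  by apply: eq_bigl => B; rewrite !subUset !sub1set.
have e2 : sampling_Pr k w (fun B => (i \in B) && (r \in B)) =
          sampling_Pr k w (fun B => A2 \subset B).
  by apply: eq_bigl => B; rewrite !subUset !sub1set.
have nj : i \notin [set j] by rewrite inE.
have nr : i \notin [set r] by rewrite inE.
have njr : j \notin [set r] by rewrite inE.
have nijr : i \notin j |: [set r] by rewrite !inE negb_or hij hir.
have c1 : #|A1| = 2%N by rewrite cardsU1 nj cards1.
have c2 : #|A2| = 2%N by rewrite cardsU1 nr cards1.
have c3 : #|A3| = 3%N by rewrite cardsU1 nijr cardsU1 njr cards1.
have s1 : \sum_(x in A1) q x = q i + q j by rewrite big_setU1 //= big_set1.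
have s2 : \sum_(x in A2) q x = q i + q r by rewrite big_setU1 //= big_set1.
have s3 : \sum_(x in A3) q x = q i + (q j + q r)
  by rewrite big_setU1 //= big_setU1 //= big_set1.
have Q3le : q i + (q j + q r) <= 1 by rewrite -s3; exact: QA_le1.
rewrite e3 e1 e2 !Pr_sup //.
rewrite !(@split_sum R d q (fun n => ('C(d - n, d - k))%:R) _ _ q1).
rewrite c1 c2 c3 s1 s2 s3.
apply: final => //.
- by rewrite ler_nat leq_bin2l //; lia.
- by rewrite ltr0n bin_gt0; lia.
- by rewrite -!natrM -natrX ler_nat; apply: binlc; lia.
- by rewrite ltr0n bin_gt0; lia.
- by rewrite ltr0n; lia.
rewrite -!natrM; congr (_%:R).
have := mul_bin_down (d - 1) (d - k).
have -> : (d - 1).-1 = (d - 2)%N by lia.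
have -> : (d - 1 - (d - k))%N = (k - 1)%N by lia.
move=> ->.
rewrite -(subn1 d) -(subn1 k).
have -> : (d - k)%N = (d - 1 - (k - 1))%N by lia.
rewrite bin_sub //; lia.
Qed.
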